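(* Let $m,n$ be positive coprime integers with $1\le m/n\le 2$ and $3\nmid(m+n)$, let $\theta\in[\pi/3,\pi/2]$ satisfy $\cos\theta = \frac{|n^2+2mn-2m^2|}{2(m^2-mn+n^2)}$, and let $$\Gamma_\theta = \frac12\begin{bmatrix} m+n & m-2n\\ (m-n)\sqrt3 & m\sqrt3\end{bmatrix}\mathbb{Z}^2.$$ Then for every $\Omega\in C_h(\theta)$, $|\Gamma_\theta|\le|\Omega|$.
   Context: $\Lambda_h = \begin{bmatrix} 1 & -1/2 \\ 0 & \sqrt3/2\end{bmatrix}\mathbb{Z}^2$. For a full-rank lattice $\Gamma\subset\mathbb{R}^2$, $|\Gamma|=\min\{\|y\|^2:y\in\Gamma\setminus\{0\}\}$. $\Gamma$ is well-rounded (WR) if it has a basis of vectors of squared norm $|\Gamma|$; such a basis can be chosen with angle in $[\pi/3,\pi/2]$ between its vectors, and this angle $\theta(\Gamma)$ is an invariant. $\mathrm{WR}(\Lambda_h)$ is the set of full-rank WR sublattices of $\Lambda_h$, and $C_h(\theta)=\{\Omega\in\mathrm{WR}(\Lambda_h):\theta(\Omega)=\theta\}$. *)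

(* Defs.v *)
From Stdlib Require Import Reals Lra ZArith.
Open Scope R_scope.

Definition pt := (R * R)%type.
Definition dot (p q : pt) : R := fst p * fst q + snd p * snd q.
Definition norm2 (p : pt) : R := dot p p.
Definition det2 (u v : pt) : R := fst u * snd v - snd u * fst v.

Definition lat_gen (u v : pt) (p : pt) : Prop :=
  exists a b : Z, p = (IZR a * fst u + IZR b * fst v, IZR a * snd u + IZR b * snd v).

Definition is_basis (L : pt -> Prop) (u v : pt) : Prop :=
  det2 u v <> 0 /\ forall p, L p <-> lat_gen u v p.

Definition full_rank_lattice (L : pt -> Prop) : Prop := exists u v, is_basis L u v.

(* r = |L| = min of squared norms of nonzero vectors of L *)
Definition is_min_norm (L : pt -> Prop) (r : R) : Prop :=
  (exists y, L y /\ y <> (0,0) /\ norm2 y = r) /\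
  (forall y, L y -> y <> (0,0) -> r <= norm2 y).

Definition angle (u v : pt) : R := acos (dot u v / (sqrt (norm2 u) * sqrt (norm2 v))).

Definition Lambda_h : pt -> Prop := lat_gen (1, 0) (-1/2, sqrt 3 / 2).

Definition sublattice (O L : pt -> Prop) : Prop := forall p, O p -> L p.

Definition well_rounded (O : pt -> Prop) : Prop :=
  exists u v, is_basis O u v /\ is_min_norm O (norm2 u) /\ norm2 v = norm2 u.

Definition WR_h (O : pt -> Prop) : Prop :=
  full_rank_lattice O /\ sublattice O Lambda_h /\ well_rounded O.

Definition theta_of_is (O : pt -> Prop) (th : R) : Prop :=
  PI / 3 <= th <= PI / 2 /\
  exists u v, is_basis O u v /\ is_min_norm O (norm2 u) /\ norm2 v = norm2 u /\
              angle u v = th.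

Definition C_h (th : R) (O : pt -> Prop) : Prop := WR_h O /\ theta_of_is O th.

Definition Gamma_mn (m n : Z) : pt -> Prop :=
  lat_gen ((IZR m + IZR n) / 2, (IZR m - IZR n) * sqrt 3 / 2)
          ((IZR m - 2 * IZR n) / 2, IZR m * sqrt 3 / 2).

(* Main.v *)
Require Import Defs.
From Stdlib Require Import Reals ZArith Znumtheory Lia Lra.
Open Scope R_scope.
Local Open Scope Z_scope.
Lemma int_part (m n W Bz : Z) : (0<m)%Z -> (0<n)%Z -> Z.gcd m n = 1%Z -> ~(3 | m+n)%Z -> (0 < W)%Z ->
  (((m*m - m*n + n*n)*Bz)*((m*m - m*n + n*n)*Bz) = (W*n*(2*m-n))*(W*n*(2*m-n)))%Z -> (m*m - m*n + n*n <= W)%Z.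
Proof.
intros Hm Hn Hg H3 HW Hsq.
set (N := m*m - m*n + n*n) in *.
assert (HNt : (N | W*n*(2*m-n))).
{ assert (E: (N*Bz - W*n*(2*m-n)) * (N*Bz + W*n*(2*m-n)) = 0) by (rewrite <- Z.sub_diag with (n:= 0); nia).
  apply Z.mul_eq_0 in E. destruct E as [E|E].
  - exists Bz. lia.
  - exists (-Bz). lia. }
destruct (Zis_gcd_bezout _ _ _ (Zgcd_is_gcd m n)) as [x y Hxy]. rewrite Hg in Hxy.
assert (HNn : rel_prime N n).
{ apply bezout_rel_prime. apply Bezout_intro with (u := x*x) (v := 2*x*y*m + y*y*n - x*x*(n-m)).
  transitivity ((x*m+y*n)^2); [unfold N; ring | rewrite Hxy; ring]. }
assert (HNt2 : (N | W*(2*m-n))).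
{ apply Gauss with n; auto. replace (n * (W * (2 * m - n))) with (W*n*(2*m-n)) by ring. auto. }
assert (HN3W : (N | 3 * W)).
{ destruct HNt2 as [k Hk].
  assert (E : 3 * (x*m+y*n)^2 = (x+2*y)*(x+2*y)*N + (2*m-n)*(3*(x+2*y)*(x+2*y)*m - (x+2*y)*(x+2*y)*(2*m-n) + 6*(x+2*y)*(-y)*m + 3*(-y)*(-y)*(2*m-n))) by (unfold N; ring).
  rewrite Hxy in E. exists ((x+2*y)*(x+2*y)*W + k*(3*(x+2*y)*(x+2*y)*m - (x+2*y)*(x+2*y)*(2*m-n) + 6*(x+2*y)*(-y)*m + 3*(-y)*(-y)*(2*m-n))).
  transitivity (W * (3*1^2)); [ring|]. rewrite E. rewrite Z.mul_add_distr_l.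
  replace (W * ((2*m-n) * (3*(x+2*y)*(x+2*y)*m - (x+2*y)*(x+2*y)*(2*m-n) + 6*(x+2*y)*(-y)*m + 3*(-y)*(-y)*(2*m-n)))) with ((W*(2*m-n)) * (3*(x+2*y)*(x+2*y)*m - (x+2*y)*(x+2*y)*(2*m-n) + 6*(x+2*y)*(-y)*m + 3*(-y)*(-y)*(2*m-n))) by ring.
  rewrite Hk. ring. }
assert (HN3 : rel_prime N 3).
{ apply rel_prime_sym. apply prime_rel_prime. apply prime_3.
  intros [k Hk]. apply H3.
  assert (H : (3 | (m+n)*(m+n))). { exists (k + m*n). unfold N in Hk. lia. }
  apply prime_mult in H; [|apply prime_3]. tauto. }
apply Z.divide_pos_le; auto. apply Gauss with 3; auto.
Qed.


Local Open Scope R_scope.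
Lemma lat_self (u v : pt) : lat_gen u v u.
Proof. exists 1%Z, 0%Z. destruct u; simpl; f_equal; ring. Qed.

Lemma lat_self2 (u v : pt) : lat_gen u v v.
Proof. exists 0%Z, 1%Z. destruct v; simpl; f_equal; ring. Qed.

Lemma lagrange (u v : pt) : dot u v * dot u v + det2 u v * det2 u v = norm2 u * norm2 v.
Proof. destruct u, v; unfold dot, det2, norm2, dot; simpl; ring. Qed.

Lemma min_uniq L a b : is_min_norm L a -> is_min_norm L b -> a = b.
Proof. intros [[y [Hy [Hy0 Hya]]] Ha] [[z [Hz [Hz0 Hzb]]] Hb].
 specialize (Ha z Hz Hz0). specialize (Hb y Hy Hy0). lra. Qed.

Theorem lemma4p8 (m n : Z) (th : R) :
  (0 < m)%Z -> (0 < n)%Z -> Z.gcd m n = 1%Z ->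
  (n <= m)%Z -> (m <= 2 * n)%Z -> ~ (3 | m + n)%Z ->
  PI / 3 <= th <= PI / 2 ->
  cos th = Rabs (IZR (n * n + 2 * m * n - 2 * m * m))
           / (2 * IZR (m * m - m * n + n * n)) ->
  forall O : pt -> Prop, C_h th O ->
  forall g w : R, is_min_norm (Gamma_mn m n) g -> is_min_norm O w -> g <= w.
Proof.
intros Hm Hn Hg Hnm Hm2 H3 Hth Hcos O [[_ [Hsub _]] [_ [u [v [[Hdet Hbas] [Hmin [Hvu Hang]]]]]]] g w Hgm Hwm.
rewrite <- (min_uniq _ _ _ Hmin Hwm).
assert (Hs : sqrt 3 * sqrt 3 = 3) by (apply sqrt_sqrt; lra).
set (s := sqrt 3) in *.
assert (HN : (0 < m*m - m*n + n*n)%Z) by nia.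
set (N := (m*m - m*n + n*n)%Z) in *.
assert (HgN : g <= IZR N).
{ destruct Hgm as [_ Hgm].
  assert (E : norm2 ((IZR m + IZR n) / 2, (IZR m - IZR n) * s / 2) = IZR N).
  { unfold norm2, dot, N; simpl. repeat rewrite ?plus_IZR, ?minus_IZR, ?mult_IZR. field_simplify.
    replace (s^2) with 3 by (rewrite <- Hs; ring). field. }
  rewrite <- E. apply Hgm. apply lat_self.
  intro H0. rewrite H0 in E. unfold norm2, dot in E; simpl in E. apply IZR_lt in HN. lra. }
apply Rle_trans with (1 := HgN).
destruct (Hsub u (proj2 (Hbas u) (lat_self u v))) as [a1 [b1 Hu]].
destruct (Hsub v (proj2 (Hbas v) (lat_self2 u v))) as [a2 [b2 Hv]].
fold s in Hu, Hv.
assert (HL := lagrange u v).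
set (W := (a1*a1 - a1*b1 + b1*b1)%Z).
set (Bz := (a1*b2 - a2*b1)%Z).
assert (Hnu : norm2 u = IZR W).
{ rewrite Hu. unfold norm2, dot, W; simpl. repeat rewrite ?plus_IZR, ?minus_IZR, ?mult_IZR. field_simplify.
  replace (s^2) with 3 by (rewrite <- Hs; ring). field. }
assert (HT : det2 u v * det2 u v = 3/4 * IZR Bz * IZR Bz).
{ rewrite Hu, Hv. unfold det2, Bz; simpl. repeat rewrite ?plus_IZR, ?minus_IZR, ?mult_IZR. field_simplify.
  replace (s^2) with 3 by (rewrite <- Hs; ring). field. }
rewrite Hnu. rewrite Hvu, Hnu in HL.
assert (HT0 : det2 u v * det2 u v > 0) by (apply Rsqr_pos_lt; exact Hdet).
assert (HW0 : 0 <= IZR W) by (rewrite <- Hnu; unfold norm2, dot; nra).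
assert (HW : 0 < IZR W) by (destruct HW0 as [H|H]; [exact H| rewrite <- H in HL; nra]).
unfold angle in Hang. rewrite Hvu, Hnu, sqrt_sqrt in Hang by lra.
set (D := dot u v) in *.
assert (HD : D * D <= IZR W * IZR W) by nra.
assert (Hc : cos th = D / IZR W).
{ rewrite <- Hang. apply cos_acos. split.
  - apply (Rmult_le_reg_r (IZR W)); auto. field_simplify; [|lra]. nra.
  - apply (Rmult_le_reg_r (IZR W)); auto. field_simplify; [|lra]. nra. }
rewrite Hc in Hcos.
apply IZR_lt in HN.
assert (E1 : D * (2 * IZR N) = Rabs (IZR (n * n + 2 * m * n - 2 * m * m)) * IZR W).
{ transitivity ((D / IZR W) * (IZR W * (2*IZR N))); [field; lra|]. rewrite Hcos. field; lra. }
set (c := IZR (n * n + 2 * m * n - 2 * m * m)) in *.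
assert (E2 : D * D * (4 * IZR N * IZR N) = c * c * (IZR W * IZR W)).
{ assert (Hcc : c * c = Rabs c * Rabs c) by (pose proof (Rsqr_abs c); unfold Rsqr in *; lra).
  rewrite Hcc. transitivity ((D * (2 * IZR N)) * (D * (2 * IZR N))); [ring|]. rewrite E1. ring. }
assert (E3 : 4 * IZR N * IZR N - c * c = 3 * IZR n * IZR n * IZR (2*m-n) * IZR (2*m-n)).
{ unfold c, N. repeat rewrite ?plus_IZR, ?minus_IZR, ?mult_IZR. ring. }
assert (Hsq : ((N*Bz)*(N*Bz) = (W*n*(2*m-n))*(W*n*(2*m-n)))%Z).
{ apply eq_IZR. repeat rewrite mult_IZR.
  apply (Rmult_eq_reg_l 3); [|lra].
  transitivity (4 * IZR N * IZR N * (det2 u v * det2 u v)); [rewrite HT; field|].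
  transitivity (4 * IZR N * IZR N * (IZR W * IZR W) - D * D * (4 * IZR N * IZR N)); [rewrite <- HL; ring|].
  rewrite E2. transitivity ((4 * IZR N * IZR N - c * c) * (IZR W * IZR W)); [ring|]. rewrite E3. ring. }
apply IZR_le. apply (int_part m n W Bz); auto. apply lt_IZR; auto.
Qed.
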